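(* Let $G_8$ be the graph obtained by identifying one vertex of a $4$-cycle with one vertex of another (disjoint) $4$-cycle; i.e., $G_8$ has vertices $v_1,\ldots,v_7$ and edges $v_1v_2, v_2v_3, v_3v_7, v_7v_1, v_3v_4, v_4v_5, v_5v_6, v_6v_3$. Then $G_8$ is a partial cube that is not $\Theta$-graceful, i.e., $G_8$ admits no $\Theta$-graceful labeling.
   Context: A subgraph $H$ of a graph $G$ is isometric if $d_H(u,v)=d_G(u,v)$ for all vertices $u,v$ of $H$, where $d$ is shortest-path distance. A partial cube is a graph isomorphic to an isometric subgraph of some hypercube. The Djoković–Winkler relation $\Theta$ on the edges of $G$: edges $xy$ and $uv$ satisfy $xy\,\Theta\,uv$ iff $d(x,u)+d(y,v)\neq d(x,v)+d(y,u)$. On a partial cube $\Theta$ is an equivalence relation; its classes are called $\Theta$-classes. For a partial cube $G$ on $n$ vertices, a bijection $f:V(G)\to\{0,1,\ldots,n-1\}$ is a $\Theta$-graceful labeling if, labeling each edge $xy$ by $|f(x)-f(y)|$, all edges in the same $\Theta$-class receive the same label and distinct $\Theta$-classes receive distinct labels. A partial cube admitting such a labeling is called $\Theta$-graceful. *)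

(* Defs.v *)
From mathcomp Require Import all_boot.
Set Implicit Arguments. Unset Strict Implicit. Unset Printing Implicit Defensive.

Fixpoint walk (T : finType) (e : rel T) (k : nat) (x y : T) : bool :=
  if k is k'.+1 then [exists z, e x z && walk e k' z y] else x == y.

(* shortest-path distance as a relation: dist e x y d <-> d_e(x,y) = d
   (no d satisfies it when y is unreachable from x, i.e. distance infinity) *)
Definition dist (T : finType) (e : rel T) (x y : T) (d : nat) : Prop :=
  walk e d x y /\ forall k, k < d -> ~~ walk e k x y.

(* numeric distance, meaningful for connected graphs (least k <= #|T| with a
   walk of length k; returns #|T|.+1 if none exists) *)
Definition gdist (T : finType) (e : rel T) (x y : T) : nat :=
  find (fun k => walk e k x y) (iota 0 #|T|.+1).

Definition cube (n : nat) := {ffun 'I_n -> bool}.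
Definition cube_adj (n : nat) : rel (cube n) :=
  fun a b => #|[set i | a i != b i]| == 1.

Definition partial_cube (T : finType) (e : rel T) : Prop :=
  exists (n : nat) (S : {set cube n}) (eH : rel (cube n)) (f : T -> cube n),
    [/\
        ((forall a b, eH a b -> [/\ a \in S, b \in S & cube_adj a b])
         /\ symmetric eH),
        (forall a b, a \in S -> b \in S ->
           forall d, dist eH a b d <-> dist (@cube_adj n) a b d),
        injective f,
        ((forall x, f x \in S) /\ (forall a, a \in S -> exists x, f x = a))
      & (forall x y, e x y <-> eH (f x) (f y))].

Definition theta (T : finType) (e : rel T) (x y u v : T) : Prop :=
  gdist e x u + gdist e y v <> gdist e x v + gdist e y u.

Definition absdiff (a b : nat) : nat := (a - b) + (b - a).

Definition theta_graceful_labeling (T : finType) (e : rel T) (f : T -> 'I_#|T|) : Prop :=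
  bijective f /\
  forall x y u v, e x y -> e u v ->
    (theta e x y u v <-> absdiff (f x) (f y) = absdiff (f u) (f v)).

Definition theta_graceful (T : finType) (e : rel T) : Prop :=
  exists f : T -> 'I_#|T|, theta_graceful_labeling e f.

(* G_8: vertices v1..v7 encoded as 0..6; edges v1v2, v2v3, v3v7, v7v1, v3v4,
   v4v5, v5v6, v6v3 *)
Definition G8_edges : seq (nat * nat) :=
  [:: (0,1); (1,2); (2,6); (6,0); (2,3); (3,4); (4,5); (5,2)].
Definition G8 : rel 'I_7 :=
  fun x y => ((val x, val y) \in G8_edges) || ((val y, val x) \in G8_edges).

(* Main.v *)
Require Import Defs.
From mathcomp Require Import all_boot.

Definition mk (k : nat) : 'I_7 :=
  (if k < 7 as b return (k < 7 = b -> 'I_7) then fun H => Ordinal H else fun _ => ord0) erefl.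
Definition en7 := map mk (iota 0 7).
Fixpoint walkc (k : nat) (x y : 'I_7) : bool :=
  if k is k'.+1 then has (fun z => G8 x z && walkc k' z y) en7 else x == y.
Definition gd (x y : 'I_7) := find (fun k => walkc k x y) (iota 0 8).
Definition edge i := nth (0,0) G8_edges i.
Definition thc (a b c d : nat) := gd (mk a) (mk c) + gd (mk b) (mk d) != gd (mk a) (mk d) + gd (mk b) (mk c).
Definition cls i := nth 0 [:: 0;1;0;1;2;3;2;3] i.
Lemma thtab : all (fun i => all (fun j => thc (edge i).1 (edge i).2 (edge j).1 (edge j).2 == (cls i == cls j)) (iota 0 8)) (iota 0 8).
Proof. vm_compute. reflexivity. Qed.
Definition good (s : seq nat) := all (fun i => all (fun j => (cls i == cls j) == (absdiff (nth 0 s (edge i).1) (nth 0 s (edge i).2) == absdiff (nth 0 s (edge j).1) (nth 0 s (edge j).2))) (iota 0 8)) (iota 0 8).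
Lemma nogood : all (fun s => ~~ good s) (permutations (iota 0 7)).
Proof. vm_compute. reflexivity. Qed.
Lemma edtab : all (fun i => [&& (edge i).1 < 7, (edge i).2 < 7 & G8 (mk (edge i).1) (mk (edge i).2)]) (iota 0 8).
Proof. vm_compute. reflexivity. Qed.
Lemma en7_uniq : uniq en7.
Proof. vm_compute. reflexivity. Qed.

Lemma mk_val k : k < 7 -> val (mk k) = k.
Proof. by move=> Hk; do 7 (case: k Hk => [|k] Hk; first by []). Qed.
Lemma mkK (x : 'I_7) : mk (val x) = x.
Proof. by apply: val_inj; apply: mk_val; exact: ltn_ord. Qed.
Lemma mem_en7 (x : 'I_7) : x \in en7.
Proof. by rewrite -(mkK x) /en7 map_f // mem_iota /= ltn_ord. Qed.
Lemma has7 (P : pred 'I_7) : [exists z, P z] = has P en7.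
Proof.
apply/existsP/hasP => [[z Pz]|[z _ Pz]]; last by exists z.
by exists z; rewrite ?mem_en7.
Qed.
Lemma walkE k x y : walk G8 k x y = walkc k x y.
Proof.
elim: k x => [|k IH] x //=; rewrite has7.
have E : (fun z => G8 x z && walk G8 k z y) =1 (fun z => G8 x z && walkc k z y) by move=> z; rewrite IH.
by rewrite (eq_has E).
Qed.
Lemma gdistE x y : gdist G8 x y = gd x y.
Proof. rewrite /gdist /gd card_ord; apply: eq_find => k; exact: walkE. Qed.

Lemma part2 : ~ theta_graceful G8.
Proof.
move=> [f [fbij H]].
pose g := fun i => val (f i).
pose s := map g en7.
have gs : forall a, a < 7 -> nth 0 s a = g (mk a).
  move=> a Ha; rewrite /s (nth_map (mk 0)); last by rewrite size_map size_iota.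
  by rewrite /en7 (nth_map 0) ?size_iota // nth_iota.
have Hgood : good s.
  apply/allP => i; rewrite mem_iota => /andP[_ Hi]; apply/allP => j; rewrite mem_iota => /andP[_ Hj].
  have /allP/(_ i) := thtab; rewrite mem_iota Hi => /(_ isT)/allP/(_ j); rewrite mem_iota Hj => /(_ isT)/eqP <-.
  have /allP/(_ i) := edtab; rewrite mem_iota Hi => /(_ isT)/and3P[Ha Hb Hab].
  have /allP/(_ j) := edtab; rewrite mem_iota Hj => /(_ isT)/and3P[Hc Hd Hcd].
  have [h1 h2] := H _ _ _ _ Hab Hcd.
  rewrite !gs //; rewrite /theta !gdistE in h1 h2; rewrite /thc.
  apply/eqP; apply/idP/idP => [/eqP ne | /eqP eq]; first by apply/eqP; exact: h1.
  by apply/eqP; exact: h2 eq.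
have Hp : perm_eq s (iota 0 7).
  have ginj : injective g by move=> x y /val_inj /(bij_inj fbij).
  have us : uniq s by rewrite map_inj_uniq // en7_uniq.
  apply: uniq_perm => //.
  apply: (uniq_min_size us _ _).2; last by rewrite size_iota size_map size_map size_iota.
  move=> v /mapP [x _ ->]; rewrite mem_iota /= /g.
  apply: leq_trans (ltn_ord (f x)) _; by rewrite card_ord.
have /allP/(_ s) := nogood; rewrite mem_permutations Hp => /(_ isT).
by rewrite Hgood.
Qed.

Definition code (x : nat) : seq bool := nth [::]
  [:: [::true;true;false;false]; [::true;false;false;false]; [::false;false;false;false];
      [::false;false;true;false]; [::false;false;true;true]; [::false;false;false;true];
      [::false;true;false;false]] x.
Definition fc (x : 'I_7) : cube 4 := [ffun i : 'I_4 => nth false (code x) i].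
Definition hc (x y : 'I_7) := count (fun i => nth false (code x) i != nth false (code y) i) (iota 0 4).
Definition ham n (a b : cube n) := #|[set i | a i != b i]|.
Arguments ham {n}.

Lemma tab1 : all (fun x => all (fun y => [&& G8 x y ==> (hc x y == 1), (hc x y == 0) ==> (x == y) & walkc (hc x y) x y]) en7) en7.
Proof. vm_compute. reflexivity. Qed.

Lemma tab (x y : 'I_7) : [&& G8 x y ==> (hc x y == 1), (hc x y == 0) ==> (x == y) & walkc (hc x y) x y].
Proof. by have /allP/(_ x (mem_en7 x))/allP/(_ y (mem_en7 y)) := tab1. Qed.

Lemma hamE (x y : 'I_7) : ham (fc x) (fc y) = hc x y.
Proof.
rewrite /ham cardsE cardE /enum_mem size_filter -enumT.
rewrite /hc -val_enum_ord count_map; apply: eq_count => i /=.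
by rewrite unfold_in /fc !ffunE.
Qed.

Lemma ham_tri n (a b c : cube n) : ham a c <= ham a b + ham b c.
Proof.
rewrite /ham; apply: leq_trans (leq_card_setU _ _).
apply: subset_leq_card; apply/subsetP => i; rewrite !inE.
by case: (a i =P b i) => [->|/eqP H] //; rewrite eqxx.
Qed.

Lemma ham_refl n (a : cube n) : ham a a = 0.
Proof.
rewrite /ham; apply/eqP; rewrite cards_eq0; apply/eqP/setP => i; by rewrite !inE eqxx.
Qed.

Lemma walk_cube n k (a b : cube n) : walk (@cube_adj n) k a b -> ham a b <= k.
Proof.
elim: k a => [|k IH] a /=; first by move/eqP->; rewrite ham_refl.
case/existsP => z /andP [Haz Hw].
apply: leq_trans (@ham_tri _ a z b) _.
have -> : ham a z = 1 by exact/eqP.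
by rewrite add1n ltnS; exact: IH.
Qed.

Lemma fc_inj : injective fc.
Proof.
move=> x y E; have := hamE x y; rewrite E ham_refl => H0.
by case/and3P: (tab x y) => _ /implyP/(_ (introT eqP (esym H0)))/eqP.
Qed.

Definition eH : rel (cube 4) := fun a b =>
  [exists x, exists y, (fc x == a) && (fc y == b) && G8 x y].

Lemma G8_sym (x y : 'I_7) : G8 x y = G8 y x.
Proof. by rewrite /G8 orbC. Qed.

Lemma eH_sym a b : eH a b -> eH b a.
Proof.
case/existsP => x /existsP [y /andP[/andP[Ex Ey] Hg]].
apply/existsP; exists y; apply/existsP; exists x; by rewrite Ex Ey G8_sym Hg.
Qed.

Lemma walk_eH k (x y : 'I_7) : walk eH k (fc x) (fc y) = walk G8 k x y.
Proof.
elim: k x => [|k IH] x /=; first exact: (inj_eq fc_inj).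
apply/existsP/existsP => [[z /andP[Hz Hw]] | [w /andP[Hw Hw']]].
- case/existsP: Hz => x' /existsP [w /andP[/andP[/eqP Ex /eqP Ez] Hg]].
  subst z; exists w; by rewrite -(fc_inj _ _ Ex) Hg -IH.
- exists (fc w); rewrite IH Hw' andbT; apply/existsP; exists x; apply/existsP; exists w.
  by rewrite !eqxx Hw.
Qed.

Lemma walk_G8_cube k (x y : 'I_7) : walk G8 k x y -> walk (@cube_adj 4) k (fc x) (fc y).
Proof.
elim: k x => [|k IH] x /=; first by move/eqP->.
case/existsP => w /andP[Hw Hw']; apply/existsP; exists (fc w); rewrite IH // andbT.
rewrite -[cube_adj _ _]/(ham _ _ == 1) hamE.
by case/and3P: (tab x w) => /implyP/(_ Hw).
Qed.

Arguments walk_G8_cube {k x y}.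
Lemma dist_uniq {T : finType} {e : rel T} {a b m} :
  walk e m a b -> (forall k, k < m -> ~~ walk e k a b) ->
  forall d, dist e a b d <-> d = m.
Proof.
move=> Hw Hmin d; split; last by move->; split.
case=> Hd Hdmin; case: (ltngtP d m) => // H.
- by have := Hmin _ H; rewrite Hd.
- by have := Hdmin _ H; rewrite Hw.
Qed.

Lemma lowb k (x y : 'I_7) : walk G8 k x y -> hc x y <= k.
Proof. by move/walk_G8_cube/walk_cube; rewrite hamE. Qed.

Lemma walk_hc (x y : 'I_7) : walk G8 (hc x y) x y.
Proof. by rewrite walkE; case/and3P: (tab x y). Qed.

Lemma walk_hc' (x y : 'I_7) : walk eH (hc x y) (fc x) (fc y).
Proof. by rewrite walk_eH walk_hc. Qed.
Lemma walk_low1 (x y : 'I_7) k : k < hc x y -> ~~ walk eH k (fc x) (fc y).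
Proof. move=> Hk; rewrite walk_eH; apply/negP => /lowb; by rewrite leqNgt Hk. Qed.
Lemma walk_low2 (x y : 'I_7) k : k < hc x y -> ~~ walk (@cube_adj 4) k (fc x) (fc y).
Proof. move=> Hk; apply/negP => /walk_cube; by rewrite hamE leqNgt Hk. Qed.

Lemma part1 : partial_cube G8.
Proof.
exists 4, (fc @: [set: 'I_7]), eH, fc; split.
- split; last by move=> a b; apply/idP/idP; exact: eH_sym.
  move=> a b /existsP [x /existsP [y /andP[/andP[/eqP <- /eqP <-] Hg]]].
  split; rewrite ?imset_f ?in_setT //.
  rewrite -[cube_adj _ _]/(ham _ _ == 1) hamE.
  by case/and3P: (tab x y) => /implyP/(_ Hg).
- move=> a b /imsetP [x _ ->] /imsetP [y _ ->] d.
  have E1 := dist_uniq (walk_hc' x y) (fun k Hk => walk_low1 x y k Hk) d.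
  have E2 := dist_uniq (walk_G8_cube (walk_hc x y)) (fun k Hk => walk_low2 x y k Hk) d.
  by split => [/E1 H|/E2 H]; [apply/E2 | apply/E1].
- exact: fc_inj.
- split; first by move=> x; rewrite imset_f ?in_setT.
  by move=> a /imsetP [x _ ->]; exists x.
- move=> x y; split => [H|].
  + by apply/existsP; exists x; apply/existsP; exists y; rewrite !eqxx H.
  + case/existsP => x' /existsP [y' /andP[/andP[/eqP Ex /eqP Ey] Hg]].
    by rewrite -(fc_inj _ _ Ex) -(fc_inj _ _ Ey).
Qed.

Theorem theorem2 : partial_cube G8 /\ ~ theta_graceful G8.
Proof. split; [exact: part1 | exact: part2]. Qed.
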